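(* In the situation of a directed cycle $a_1\to b_1\to\cdots\to a_p\to b_p\to a_{p+1}=a_1$ in $\Gamma^M$ as described in the context, assume in addition that $M$ is the prefix matching generated by a diagonal matching rule $F$. Then $d_i=c_i+1$ for all $i$.
   Context: $G$ is a finite simple connected graph with distance $d$; $\ell(x_0,\dots,x_k)=\sum_{i=0}^{k-1}d(x_i,x_{i+1})$; sequences are elements of $I_{k,l}(G)=\{(x_0,\dots,x_k)\in V(G)^{k+1}:x_i\ne x_{i+1}\ \forall i,\ \ell=l\}$. $\Gamma$ is the directed graph on sequences with an edge $a\to b$ whenever $b$ is obtained from $a=(x_0,\dots,x_k)$ by deleting some $x_i$, $1\le i\le k-1$, with $\ell(b)=\ell(a)$. A matching is a set of pairwise vertex-disjoint edges of $\Gamma$; $\Gamma^M$ is $\Gamma$ with edges of $M$ reversed. Matching states: ''unmatched'', ''insert$(i,v)$'' (matched to $(x_0,\dots,x_i,v,x_{i+1},\dots,x_k)$), ''delete$(i)$'' (matched to $(x_0,\dots,\hat x_i,\dots,x_k)$). A prefix matching: whenever $(x_0,\dots,x_k)$ has state insert$(i,v)$ (resp. delete$(i)$), every sequence $(x_0,\dots,x_{i+1},y_{i+2},\dots,y_{k'})$ has the same state. A matching rule is a function $F$ from sequences to $\{\epsilon\}\cup\{\iota(v):v\in V(G)\}\cup\{\delta\}$; a prefix matching $M$ is generated by $F$ if for every sequence $(x_0,\dots,x_k)$, $k\ge1$, with unmatched prefix $(x_0,\dots,x_{k-1})$, its state is insert$(k-1,v)$ iff $F(x_0,\dots,x_k)=\iota(v)$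 and delete$(k-1)$ iff $F(x_0,\dots,x_k)=\delta$. $F$ is valid if (1) $F(x_0,\dots,x_k)=\iota(v)$ implies $v\notin\{x_{k-1},x_k\}$, $d(x_{k-1},v)+d(v,x_k)=d(x_{k-1},x_k)$, $F(x_0,\dots,x_{k-1},v)=\epsilon$, $F(x_0,\dots,x_{k-1},v,x_k)=\delta$; (2) $F(x_0,\dots,x_k)=\delta$ implies $d(x_{k-2},x_{k-1})+d(x_{k-1},x_k)=d(x_{k-2},x_k)$ and $F(x_0,\dots,x_{k-2},x_k)=\iota(x_{k-1})$. A valid $F$ is diagonal if, w.r.t. the prefix matching it generates, $F(x_0,\dots,x_k)\ne\epsilon$ for every sequence with unmatched prefix and $d(x_{k-1},x_k)\ge2$. Cycle setting: $a_i\in I_{k,l}(G)$, $b_i\in I_{k-1,l}(G)$, each $a_i\to b_i$ is an edge of $\Gamma$ not in $M$, each $b_i\to a_{i+1}$ is a reversed edge of $M$; $d_i$ is the position of the entry of $a_i$ deleted to obtain $b_i$; $a_{i+1}=(b_{i,0},\dots,b_{i,c_i},u_i,b_{i,c_i+1},\dots,b_{i,k-1})$ where $b_i=(b_{i,0},\dots,b_{i,k-1})$; indices $i$ are taken modulo $p$. *)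

(* Defs.v *)
From mathcomp Require Import all_boot.
Set Implicit Arguments. Unset Strict Implicit. Unset Printing Implicit Defensive.

Section Defs.
Variables (T : finType) (e : rel T).

Definition simple_connected_graph : Prop :=
  [/\ symmetric e, irreflexive e & forall x y : T, connect e x y].

Definition walkb (n : nat) (x y : T) : bool :=
  [exists t : n.-tuple T, path e x t && (last x t == y)].

(* graph distance: least n admitting a walk of length n (for a connected graph,
   it is < #|T|) *)
Definition dist (x y : T) : nat := find (fun n => walkb n x y) (iota 0 #|T|).

Fixpoint len (x : seq T) : nat :=
  match x with
  | a :: ((b :: _) as t) => dist a b + len t
  | _ => 0
  end.

Definition isseq (x : seq T) : bool :=
  (0 < size x) && sorted (fun a b => a != b) x.

Definition inI (k l : nat) (x : seq T) : bool :=
  [&& isseq x, size x == k.+1 & len x == l].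

(* (x_0,..,x_i,v,x_{i+1},..,x_k) *)
Definition ins (i : nat) (v : T) (x : seq T) : seq T :=
  take i.+1 x ++ v :: drop i.+1 x.

Definition del (i : nat) (x : seq T) : seq T := take i x ++ drop i.+1 x.

Definition gedge (a b : seq T) : Prop :=
  [/\ isseq a, isseq b &
      exists i, [/\ 0 < i, i < (size a).-1, b = del i a & len b = len a]].

Definition is_matching (M : rel (seq T)) : Prop :=
  (forall a b, M a b -> gedge a b) /\
  (forall a b a' b', M a b -> M a' b' ->
     (a = a' \/ a = b' \/ b = a' \/ b = b') -> a = a' /\ b = b').

Inductive mstate := Unmatched | Insert of nat & T | Delete of nat.

Definition has_state (M : rel (seq T)) (x : seq T) (s : mstate) : Prop :=
  match s with
  | Unmatched => forall y, ~ M x y /\ ~ M y x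
  | Insert i v => M (ins i v x) x
  | Delete i => M x (del i x)
  end.

Definition prefix_matching (M : rel (seq T)) : Prop :=
  is_matching M /\
  (forall x s, isseq x ->
     match s with Insert i _ | Delete i =>
       has_state M x s -> i.+2 <= size x ->
       forall y, isseq y -> take i.+2 y = take i.+2 x -> has_state M y s
     | Unmatched => True end).

Inductive rule := Eps | Iota of T | Delta.

Definition generated_by (F : seq T -> rule) (M : rel (seq T)) : Prop :=
  forall p z, isseq (rcons p z) -> 0 < size p -> has_state M p Unmatched ->
    (forall v, has_state M (rcons p z) (Insert (size p).-1 v) <-> F (rcons p z) = Iota v)
    /\ (has_state M (rcons p z) (Delete (size p).-1) <-> F (rcons p z) = Delta).

Definition valid_rule (F : seq T -> rule) : Prop :=
  (forall x v, isseq x -> F x = Iota v ->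
     exists p y z, x = rcons (rcons p y) z /\ [/\ v != y, v != z,
       dist y v + dist v z = dist y z,
       F (rcons (rcons p y) v) = Eps &
       F (rcons (rcons (rcons p y) v) z) = Delta])
  /\
  (forall x, isseq x -> F x = Delta ->
     exists p w y z, [/\ x = p ++ (w :: y :: z :: nil),
       dist w y + dist y z = dist w z &
       F (p ++ (w :: z :: nil)) = Iota y]).

Definition diagonal (F : seq T -> rule) (M : rel (seq T)) : Prop :=
  valid_rule F /\
  forall p y z, isseq (rcons (rcons p y) z) ->
    has_state M (rcons p y) Unmatched -> 2 <= dist y z ->
    F (rcons (rcons p y) z) <> Eps.

End Defs.

(* Main.v *)
Require Import Defs.
From mathcomp Require Import all_boot.
From mathcomp Require Import zify.
Set Implicit Arguments. Unset Strict Implicit. Unset Printing Implicit Defensive.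

Section Aux.
Variable T : finType.
Implicit Types s x y : seq T.

Lemma sorted_nth_neq (x0 : T) s i : sorted (fun a b => a != b) s -> i.+1 < size s ->
  nth x0 s i != nth x0 s i.+1.
Proof.
elim: s i => [|a s IH] [|i] //=.
- by case: s IH => [|b s] //= _ /andP [H _].
- move=> H Hi. apply: IH; [exact: path_sorted H | by []].
Qed.

Lemma isseq_take s j : isseq s -> 0 < j -> isseq (take j s).
Proof.
move=> /andP [H1 H2] Hj; apply/andP; split; last exact: take_sorted.
by rewrite size_take; case: ifP => //; lia.
Qed.

Lemma size_ins i (v : T) s : size (ins i v s) = (size s).+1.
Proof. rewrite /ins size_cat /= size_take size_drop; case: ifP; lia. Qed.

Lemma size_del i s : i < size s -> size (del i s) = (size s).-1.
Proof. move=> H; rewrite /del size_cat size_take size_drop H; lia. Qed.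

Lemma ins_neq i (v : T) s : ins i v s <> s.
Proof. by move=> H; have := size_ins i v s; rewrite H; lia. Qed.

Lemma del_neq (x0 : T) s i m : isseq s -> i < m -> m < size s -> del i s <> del m s.
Proof.
move=> /andP [_ Hs] Him Hm E.
have := congr1 (fun t => nth x0 t i) E.
rewrite /del !nth_cat !size_takel; try lia.
rewrite ltnn subnn Him nth_drop nth_take // addn0 => E2.
by move: (sorted_nth_neq x0 (i:=i) Hs ltac:(lia)); rewrite E2 eqxx.
Qed.

Lemma ins_inj i j (v w : T) s : isseq (ins i v s) -> i < size s -> j < size s ->
  ins i v s = ins j w s -> i = j.
Proof.
wlog: i j v w / i < j.
  move=> W H1 Hi Hj E; case: (ltngtP i j) => // h.
  - exact: W h H1 Hi Hj E.
  - symmetry; apply: (W j i w v h) => //; by rewrite -E.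
move=> Hij /andP [_ Hs] Hi Hj E; exfalso.
have x0 := v.
have A : nth x0 (ins i v s) i.+1 = v.
  by rewrite /ins nth_cat size_takel ?ltnn ?subnn //; lia.
have B : nth x0 (ins i v s) i.+2 = nth x0 s i.+1.
  rewrite /ins nth_cat size_takel; last lia.
  by rewrite ltnNge leqnSn /= subSn // subnn /= nth_drop addn0.
have C : nth x0 (ins j w s) i.+1 = nth x0 s i.+1.
  rewrite /ins nth_cat size_takel; last lia.
  have -> : i.+1 < j.+1 by lia.
  by rewrite nth_take //; lia.
have := sorted_nth_neq x0 (i:=i.+1) Hs.
rewrite size_ins A B -C -E A eqxx /= => H.
have: false by apply: H; lia.
by [].
Qed.

Lemma ins_del (x0 : T) y i : 0 < i -> i < size y -> y = ins i.-1 (nth x0 y i) (del i y).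
Proof.
move=> H0 Hi; rewrite /ins /del prednK //.
rewrite take_cat drop_cat size_takel ?ltnn ?subnn ?take0 ?drop0 ?cats0; last lia.
by rewrite -drop_nth // cat_take_drop.
Qed.

Variable e : rel T.

Lemma len_cat s w t : len e (s ++ w :: t) = len e (rcons s w) + len e (w :: t).
Proof.
elim: s => [|a s IH] //=.
case: s IH => [|b s] //= IH; by rewrite IH addnA.
Qed.

Lemma dist0 a b : dist e a b = 0 -> a = b.
Proof.
rewrite /dist.
have : 0 < #|T| by apply/card_gt0P; exists a.
case: #|T| => [|n] // _ /=.
case: ifP => // /existsP [t /andP [_ /eqP]].
by rewrite (tuple0 t) /=.
Qed.

Lemma prefix_unmatched (M : rel (seq T)) x m j : prefix_matching e M -> isseq x ->
  M x (del m x) -> m.+1 < size x -> 0 < j -> j <= m.+1 ->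
  has_state M (take j x) (Unmatched T).
Proof.
move=> [[Hg Hdis] Hpre] Hx HM Hm Hj0 Hjm y; split.
- move=> HMy.
  have [_ _ [i [Hi0 Hi1 Ey _]]] := Hg _ _ HMy.
  rewrite size_takel in Hi1; last lia.
  have Hsj : isseq (take j x) by exact: isseq_take.
  have := Hpre _ (@Delete T i) Hsj; rewrite /= -Ey => /(_ HMy).
  rewrite size_takel; last lia.
  move=> /(_ ltac:(lia) x Hx); rewrite take_takel; last lia.
  move=> /(_ erefl) HMi.
  have [_ E] := Hdis _ _ _ _ HMi HM (or_introl erefl).
  have x0 : T by case: x Hm {Hx Hsj HMy Ey HMi HM E Hpre Hjm} => [|t] //.
  apply: (del_neq x0 Hx _ _ E); lia.
- move=> HMy.
  have [Hy _ [i [Hi0 Hi1 Ey _]]] := Hg _ _ HMy.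
  have x0 : T by case: y Hi1 {Hy HMy Ey} => [|t] //.
  have Eyi := ins_del x0 Hi0 (leq_trans Hi1 (leq_pred _)).
  rewrite -Ey in Eyi.
  have Hsj : isseq (take j x) by exact: isseq_take.
  have := Hpre _ (@Insert T i.-1 (nth x0 y i)) Hsj; rewrite /= -Eyi => /(_ HMy).
  have Hsz : size (take j x) = (size y).-1 by rewrite Ey size_del //; lia.
  have Hjy : j = (size y).-1 by rewrite -Hsz size_takel //; lia.
  rewrite Hsz => /(_ ltac:(lia) x Hx); rewrite take_takel; last lia.
  move=> /(_ erefl) HMi.
  have [E _] := Hdis _ _ _ _ HMi HM (or_intror (or_intror (or_introl erefl))).
  exact: ins_neq E.
Qed.

Lemma del_cat P (w y : T) t : del (size P).+1 (P ++ w :: y :: t) = P ++ w :: t.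
Proof. elim: P => [|a P IH]; first by rewrite /del /= drop0. rewrite /del /= in IH *. by rewrite IH. Qed.

Lemma take_cat_rcons P (w : T) t : take (size P).+1 (P ++ w :: t) = rcons P w.
Proof. elim: P => [|a P IH]; first by rewrite /= take0. by rewrite /= IH. Qed.

Lemma take_cat_rcons2 P (w z : T) t : take (size P).+2 (P ++ w :: z :: t) = rcons (rcons P w) z.
Proof. elim: P => [|a P IH]; first by rewrite /= take0. by rewrite /= IH. Qed.

End Aux.

Theorem lemma3p7 (T : finType) (e : rel T) (F : seq T -> rule T)
    (M : rel (seq T)) (k l p : nat) (a b : nat -> seq T)
    (c d : nat -> nat) (u : nat -> T) :
  simple_connected_graph e ->
  prefix_matching e M -> generated_by F M -> diagonal e F M ->
  0 < k -> 0 < p -> a p = a 0 ->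
  (forall i, i < p ->
     [/\ inI e k l (a i), inI e k.-1 l (b i),
         gedge e (a i) (b i), ~ M (a i) (b i) & M (a i.+1) (b i)]) ->
  (forall i, i < p -> [/\ 0 < d i, d i < k & b i = del (d i) (a i)]) ->
  (forall i, i < p -> (c i).+1 < k /\ a i.+1 = ins (c i) (u i) (b i)) ->
  forall i, i < p -> d i = (c i).+1.
Proof.
move=> Hsc HP Hgen [Hval Hdiag] Hk Hp Ep Hab Hdd Hcc i Hi.
have [[Hg Hdis] Hpre] := HP.
have [y HMxy] : exists y, M (a i) y.
  case: i Hi => [|i'] Hi'.
  - have [_ _ _ _ H] := Hab p.-1 ltac:(lia).
    rewrite prednK // Ep in H. by exists (b p.-1).
  - have [_ _ _ _ H] := Hab i' ltac:(lia). by exists (b i').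
have [Hai Hbi _ _ _] := Hab i Hi.
have [Hd0 Hdk Eb] := Hdd i Hi.
have [Hck Ea] := Hcc i Hi.
have [_ _ _ _ HMb] := Hab i Hi; rewrite Ea in HMb.
clear Ea Hab Hdd Hcc.
move: HMxy Hai Hbi Hd0 Hdk Eb Hck HMb.
move: (a i) (b i) (d i) (c i) (u i) => x bb d0 c0 u0.
move=> HMxy /and3P [Hx /eqP Hsx /eqP Hlx] /and3P [Hb /eqP Hsb /eqP Hlb] Hd0 Hdk Eb Hck HMb.
have [_ _ [m [Hm0 Hm1 Ey _]]] := Hg _ _ HMxy.
rewrite Ey in HMxy; rewrite Hsx /= in Hm1.
have Hsb' : size bb = k by rewrite Hsb; lia.
case: (leqP m.+2 d0) => Hmd.
- exfalso.
  have Ht : take m.+2 bb = take m.+2 x.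
    rewrite Eb /del takel_cat ?size_takel ?take_takel //; lia.
  have := Hpre _ (@Delete T m) Hx; rewrite /= => /(_ HMxy ltac:(lia) bb Hb Ht) HMb2.
  have [E _] := Hdis _ _ _ _ HMb2 HMb (or_intror (or_introl erefl)).
  exact: ins_neq (esym E).
have Hun := prefix_unmatched HP Hx HMxy ltac:(lia) Hd0 ltac:(lia).
case Edrop: (drop d0.-1 x) => [|w [|y0 [|z Q]]];
  try (have := size_drop d0.-1 x; rewrite Edrop /=; lia).
set P := take d0.-1 x.
have Ex : x = P ++ w :: y0 :: z :: Q by rewrite -Edrop cat_take_drop.
have HsP : size P = d0.-1 by rewrite size_takel; lia.
have Ed0 : d0 = (size P).+1 by lia.
have Ebd : bb = P ++ w :: z :: Q by rewrite Eb Ex Ed0 del_cat.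
rewrite Ex Ed0 take_cat_rcons in Hun.
have Hdist : dist e w z = dist e w y0 + dist e y0 z.
  move: Hlx Hlb; rewrite Ex Ebd !len_cat /= => <-; lia.
have [Hwy Hyz] : w != y0 /\ y0 != z.
  move: Hx; rewrite Ex => /andP [_ /cat_sorted2 [_]] /= /andP [-> /andP [-> _]]; by [].
have H2 : 2 <= dist e w z.
  rewrite Hdist.
  have h1 : dist e w y0 != 0 by apply/eqP => /dist0 E; rewrite E eqxx in Hwy.
  have h2 : dist e y0 z != 0 by apply/eqP => /dist0 E; rewrite E eqxx in Hyz.
  lia.
have Hisr : isseq (rcons (rcons P w) z).
  have := isseq_take (j:=(size P).+2) Hb; rewrite Ebd take_cat_rcons2; apply; lia.
have HF := Hdiag P w z Hisr Hun H2.
have [HGi HGd] := Hgen (rcons P w) z Hisr ltac:(by rewrite size_rcons) Hun.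
rewrite size_rcons /= in HGi HGd.
have Htk : take (size P).+2 bb = take (size P).+2 (rcons (rcons P w) z).
  by rewrite Ebd take_cat_rcons2 take_oversize // !size_rcons.
case EF: (F (rcons (rcons P w) z)) => [|v|] //.
- have Hst := (proj2 (HGi v)) EF.
  have := Hpre _ (@Insert T (size P) v) Hisr; rewrite /= => /(_ Hst).
  rewrite !size_rcons => /(_ (leqnn _) bb Hb Htk) Hst2.
  have [E _] := Hdis _ _ _ _ Hst2 HMb (or_intror (or_intror (or_intror erefl))).
  have [Hins _ _] := Hg _ _ HMb.
  have Hc1 : c0 < size bb by rewrite Hsb'; clear -Hck; lia.
  have Hc2 : size P < size bb by rewrite Hsb' HsP; clear -Hdk; lia.
  have := ins_inj Hins Hc1 Hc2 (esym E). move=> ->; exact Ed0.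
- exfalso.
  have Hst := (proj2 HGd) EF.
  have := Hpre _ (@Delete T (size P)) Hisr; rewrite /= => /(_ Hst).
  rewrite !size_rcons => /(_ (leqnn _) bb Hb Htk) Hst2.
  have [E _] := Hdis _ _ _ _ Hst2 HMb (or_intror (or_introl erefl)).
  exact: ins_neq (esym E).
Qed.
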